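(* Let $d\le\ell$ be positive integers and $L\ge2$. In an $L$-graph $\mathcal G$ with a $(p,n,d)$-non-backtracking multi-labelling $\mathcal L$, the number of $T_4$ edges is at most $12\,\bar\Delta(\mathcal L)\,\ell$.
   Context: An $L$-graph is a cycle with $2L$ vertices alternating between $n$-vertices and $p$-vertices. A $(p,n,d)$-non-backtracking multi-labelling assigns an $n$-label in $[n]$ to each $n$-vertex and a tuple of $d$ distinct $p$-labels in $[p]$ to each $p$-vertex ($d\le\ell$) such that (i) each $n$-vertex's label differs from those of the $n$-vertices immediately preceding and following it, and each $p$-vertex's tuple differs (up to reordering) from those of the $p$-vertices immediately preceding and following it; (ii) for each $n$-label $i$ and $p$-label $j$ the number of edges with $n$-endpoint labelled $i$ and $p$-endpoint's tuple containing $j$ is even. With $\tilde r,\tilde c$ the numbers of distinct $n$- and $p$-labels, $\bar\Delta(\mathcal L)=1+\frac L2+\frac{dL}{2\ell}-\tilde r-\frac{\tilde c}{\ell}$. Fix a starting $p$-vertex and orientation. For an edge between an $n$-vertex labelled $i$ and a $p$-vertex with tuple $(j_1,\dots,j_d)$, its sub-edges are the pairs $(i,j_k)$ in traversal order; a sub-edge is $t_1$ if the label at its later endpoint has not previously appeared on a vertex of that kind, $t_3$ if the same label pair has occurred exactly once before as a sub-edge and that occurrence was $t_1$, and $t_4$ otherwise. An edge is $T_1$ if all its sub-edges are $t_1$, $T_3$ if all are $t_3$, and $T_4$ otherwise. *)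

(* Defs.v *)
From mathcomp Require Import all_boot all_order all_algebra.
Set Implicit Arguments.
Unset Strict Implicit.
Unset Printing Implicit Defensive.
Import Order.TTheory GRing.Theory Num.Theory.

(* L-graph: cycle  p_0, n_0, p_1, n_1, ..., p_(L-1), n_(L-1), (back to p_0),
   traversed from the fixed starting p-vertex p_0 in this orientation.
   n-vertex n_k carries n-label  nl k : 'I_n,
   p-vertex p_k carries the d-tuple  pl k : d.-tuple 'I_p.
   Edges: (k,false) = {p_k, n_k}   (later endpoint n_k),
          (k,true)  = {n_k, p_(k+1 mod L)}  (later endpoint p_(k+1 mod L)). *)

Section LGraph.
Variables (L n p d : nat).
Variable nl : 'I_L -> 'I_n.
Variable pl : 'I_L -> d.-tuple 'I_p.

Definition edge := ('I_L * bool)%type.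

Definition edge_rank (e : edge) : nat := 2 * e.1 + e.2.

Definition edge_n (e : edge) : 'I_n := nl e.1.
Definition edge_p (e : edge) : d.-tuple 'I_p :=
  if e.2 then pl (ordS e.1) else pl e.1.

Definition nb_multilabelling : Prop :=
  [/\ (forall k, uniq (pl k)),
      (forall k, nl k != nl (ordS k)),
      (forall k, ~~ perm_eq (pl k) (pl (ordS k))) &
      (forall (i : 'I_n) (j : 'I_p),
          ~~ odd #|[set e : edge | (edge_n e == i) && (j \in edge_p e)]|)].

(* sub-edges: (e, m) stands for the pair (edge_n e, m-th entry of edge_p e) *)
Definition subedge := (edge * 'I_d)%type.

Definition sub_rank (s : subedge) : nat := edge_rank s.1 * d + s.2.

Definition sub_pair (s : subedge) : 'I_n * 'I_p :=
  (edge_n s.1, tnth (edge_p s.1) s.2).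

(* t_1: the label at the later endpoint did not appear on an earlier
   vertex of the same kind in the traversal *)
Definition is_t1 (s : subedge) : bool :=
  let k := s.1.1 in
  if s.1.2 then
    [forall k' : 'I_L, (k' <= k)%N ==> (tnth (edge_p s.1) s.2 \notin pl k')]
  else
    [forall k' : 'I_L, (k' < k)%N ==> (nl k' != nl k)].

Definition prev_occ (s : subedge) : {set subedge} :=
  [set s' : subedge | (sub_rank s' < sub_rank s)%N & sub_pair s' == sub_pair s].

Definition is_t3 (s : subedge) : bool :=
  ~~ is_t1 s && (#|prev_occ s| == 1%N) && [forall s' in prev_occ s, is_t1 s'].

Definition is_T1 (e : edge) : bool := [forall m : 'I_d, is_t1 (e, m)].
Definition is_T3 (e : edge) : bool := [forall m : 'I_d, is_t3 (e, m)].
Definition is_T4 (e : edge) : bool := ~~ is_T1 e && ~~ is_T3 e.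

Definition num_T4 : nat := #|[set e : edge | is_T4 e]|.

Definition r_tilde : nat := #|[set nl k | k in 'I_L]|.
Definition c_tilde : nat := #|[set j : 'I_p | [exists k : 'I_L, j \in pl k]]|.

Definition Delta_bar (ell : nat) : rat :=
  1 + L%:R / 2 + (d * L)%:R / (2 * ell)%:R - r_tilde%:R - c_tilde%:R / ell%:R.

End LGraph.

(* Main.v *)
Require Import Defs.
From mathcomp Require Import all_boot all_order all_algebra zify.
Set Implicit Arguments.
Unset Strict Implicit.
Unset Printing Implicit Defensive.

Lemma tnth_idx (T : eqType) (d : nat) (t : d.-tuple T) j :
  j \in t -> exists m, tnth t m = j.
Proof.
move=> Hj; have H : (index j t < d)%N.
  by have := index_mem j t; rewrite size_tuple Hj.
by exists (Ordinal H); rewrite (tnth_nth j) nth_index.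
Qed.

Lemma tnth_uniq_inj (T : eqType) (d : nat) (t : d.-tuple T) m m' :
  uniq t -> tnth t m = tnth t m' -> m = m'.
Proof.
move=> Hu E; apply: val_inj; apply/eqP.
by rewrite -(@nth_uniq _ (tnth t m) t m m') ?size_tuple // -!tnth_nth E.
Qed.

Lemma first_occ (L : nat) (P : pred 'I_L) k :
  P k -> exists k0, P k0 /\ forall k' : 'I_L, (k' < k0)%N -> ~~ P k'.
Proof.
move=> Pk; case: (arg_minnP (fun x : 'I_L => val x) Pk) => k0 Pk0 Hmin.
exists k0; split=> // k' Hk'; apply/negP=> Pk'.
by have := Hmin _ Pk'; rewrite leqNgt Hk'.
Qed.

Lemma last_occ (L : nat) (P : pred 'I_L) k :
  P k -> exists k0, P k0 /\ forall k' : 'I_L, (k0 < k')%N -> ~~ P k'.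
Proof.
move=> Pk; case: (arg_maxnP (fun x : 'I_L => val x) Pk) => k0 Pk0 Hmax.
exists k0; split=> // k' Hk'; apply/negP=> Pk'.
by move: (Hmax _ Pk') Hk' => /= ; lia.
Qed.

Lemma ordS_val (L : nat) (k : 'I_L) : (k.+1 < L)%N -> val (ordS k) = k.+1.
Proof. by move=> H; rewrite /= modn_small. Qed.

Lemma cardU_le (T : finType) (A B : {set T}) : (#|A :|: B| <= #|A| + #|B|)%N.
Proof. by rewrite -cardsUI leq_addr. Qed.

Lemma cardU_disj (T : finType) (A B : {set T}) :
  A :&: B = set0 -> #|A :|: B| = (#|A| + #|B|)%N.
Proof. by move=> H; rewrite -cardsUI H cards0 addn0. Qed.

Section Main.
Variables (L n p d : nat) (nl : 'I_L -> 'I_n) (pl : 'I_L -> d.-tuple 'I_p).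
Hypothesis d_gt0 : (0 < d)%N.
Hypothesis Hnb : nb_multilabelling nl pl.

Lemma Huniq k : uniq (pl k). Proof. by case: Hnb. Qed.
Lemma Hpar i j :
  ~~ odd #|[set e : edge L | (edge_n nl e == i) && (j \in edge_p pl e)]|.
Proof. by case: Hnb. Qed.

Lemma rank_lt_edge (s s' : subedge L d) :
  (sub_rank s' < sub_rank s)%N -> (edge_rank s'.1 <= edge_rank s.1)%N.
Proof.
rewrite /sub_rank; have := ltn_ord s.2; have := ltn_ord s'.2.
move: (edge_rank s.1) (edge_rank s'.1) (val s.2) (val s'.2) => a b x y.
move=> Hy Hx H; rewrite leqNgt; apply/negP => Hab.
have : ((a.+1) * d <= b * d)%N by rewrite leq_mul2r Hab orbT.
nia.
Qed.

Lemma rank_eq_edge (s s' : subedge L d) :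
  (sub_rank s' < sub_rank s)%N -> edge_rank s'.1 = edge_rank s.1 ->
  (s'.2 < s.2)%N.
Proof. by rewrite /sub_rank => H E; rewrite E ltn_add2l in H. Qed.

Lemma sub_rank_inj : injective (@sub_rank L d).
Proof.
move=> s s' E.
have h1 : edge_rank s.1 = edge_rank s'.1.
  move: E => /(congr1 (divn^~ d)); rewrite /sub_rank.
  by rewrite !divnMDl // !divn_small // !addn0.
have h2 : val s.2 = val s'.2 by move: E; rewrite /sub_rank h1 => /addnI.
case: s s' E h1 h2 => [[k b] m] [[k' b'] m'] _ /= h1 h2.
have em : m = m' by apply: val_inj.
have ek : val k = val k' by rewrite /edge_rank /= in h1; case: b b' h1 => [] [] /=; lia.
have eb : b = b' by rewrite /edge_rank /= in h1; case: b b' h1 => [] [] /=; lia.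
by rewrite em eb (val_inj ek).
Qed.


Lemma t1_noprev (s s' : subedge L d) : is_t1 nl pl s ->
  sub_pair nl pl s' = sub_pair nl pl s -> ~~ (sub_rank s' < sub_rank s)%N.
Proof.
move=> Ht Hp; apply/negP => Hr.
have Her := rank_lt_edge Hr.
have Heq := @rank_eq_edge s s' Hr.
move: Ht Hp Her Heq; clear Hr; case: s => [[k b] m]; case: s' => [[k' b'] m'].
rewrite /sub_pair /edge_rank /edge_n /edge_p /= => Ht [Hn Hj] Her Heq.
case: b Ht Her Heq Hj => /forallP Ht Her Heq Hj.
-
  have Hjin : tnth (pl (ordS k)) m \in pl (ordS k) := mem_tnth _ _.
  case: b' Her Heq Hj => /= Her Heq Hj.
  + have [lt|ge] := ltnP k' k.
    * have Hs : val (ordS k') = k'.+1 by apply: ordS_val; move: (ltn_ord k); lia.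
      have := Ht (ordS k'); rewrite Hs lt /= -Hj => /negP; apply; exact: mem_tnth.
    * have ek : k' = k by apply: ord_inj; lia.
      subst k'.
      have := Heq erefl => /= Hmm.
      have := tnth_uniq_inj (Huniq (ordS k)) Hj => Em; subst m'.
      by rewrite ltnn in Hmm.
  + have := Ht k'; rewrite (_ : (k' <= k)%N = true) /=; last by lia.
    by rewrite -Hj mem_tnth.
-
  case: b' Her Heq Hj => /= Her Heq Hj;
    (have [lt|ge] := ltnP k' k; first by have := Ht k'; rewrite lt Hn eqxx).
    by lia.
  have ek : k' = k by apply: ord_inj; lia.
  subst k'.
  have := Heq erefl => /= Hmm.
  have := tnth_uniq_inj (Huniq k) Hj => Em; subst m'.
  by rewrite ltnn in Hmm.
Qed.

Lemma second_occ (s : subedge L d) : is_t1 nl pl s ->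
  exists s2, is_t3 nl pl s2 /\ prev_occ nl pl s2 = [set s].
Proof.
move=> Ht.
set i := edge_n nl s.1; set j := tnth (edge_p pl s.1) s.2.
set E := [set e : edge L | (edge_n nl e == i) && (j \in edge_p pl e)].
have sE : s.1 \in E by rewrite inE eqxx mem_tnth.
have gt1 : (1 < #|E|)%N.
  have := Hpar i j; rewrite -/E.
  have : (0 < #|E|)%N by apply/card_gt0P; exists s.1.
  by case: #|E| => [|[|k]].
have [e' [e'E ne']] : exists e', e' \in E /\ e' != s.1.
  case/card_gt1P: gt1 => x [y [xE yE nxy]].
  case: (eqVneq x s.1) => [ex|nx]; last by exists x.
  by exists y; split=> //; rewrite -ex eq_sym.
move: (e'E); rewrite inE => /andP [/eqP ni' jin].
have [m' Hm'] := tnth_idx jin.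
set O := [set x : subedge L d |
           (sub_pair nl pl x == sub_pair nl pl s) && (x != s)].
have eO : (e', m') \in O.
  rewrite inE /sub_pair /= ni' Hm' eqxx /=.
  by apply/negP => /eqP E'; rewrite -E' eqxx in ne'.
case: (arg_minnP (@sub_rank L d) eO) => s2 Os2 Hmin.
have : s2 \in O by []. rewrite /O inE => /andP [/eqP Hps2 ns2].
have Hlt : (sub_rank s < sub_rank s2)%N.
  have h1 := t1_noprev Ht Hps2.
  have h2 : sub_rank s2 != sub_rank s.
    by apply/negP => /eqP /sub_rank_inj E'; rewrite E' eqxx in ns2.
  move: h1 h2; rewrite -leqNgt leq_eqVlt eq_sym => /orP [->|] //.
have Hprev : prev_occ nl pl s2 = [set s].
  apply/setP => x; rewrite !inE.
  case: (eqVneq x s) => [->|nx]; first by rewrite Hlt Hps2 eqxx.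
  apply/negbTE; apply/negP => /andP [lx /eqP px].
  have xO : x \in O by rewrite /O inE px Hps2 eqxx nx.
  by have := Hmin _ xO; rewrite leqNgt lx.
exists s2; split=> //.
rewrite /is_t3 Hprev cards1 eqxx andbT.
apply/andP; split.
  by apply/negP => t2; have := t1_noprev t2 (esym Hps2); rewrite Hlt.
by apply/forall_inP => x; rewrite inE => /eqP ->.
Qed.

Lemma t1_le_t3 :
  (#|[set s : subedge L d | is_t1 nl pl s]| <=
   #|[set s : subedge L d | is_t3 nl pl s]|)%N.
Proof.
pose f x := odflt x [pick y in prev_occ nl pl x].
apply: (leq_trans _ (leq_imset_card f _)).
apply: subset_leq_card; apply/subsetP => s; rewrite inE => Ht.
have [s2 [H3 Hp]] := second_occ Ht.
apply/imsetP; exists s2; first by rewrite inE.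
rewrite /f Hp; case: pickP => [y|H]; first by rewrite inE => /eqP ->.
by have := H s; rewrite inE eqxx.
Qed.

Definition Nset := [set k : 'I_L | [forall k' : 'I_L, (k' < k)%N ==> (nl k' != nl k)]].
Definition Lset := [set k : 'I_L | [forall k' : 'I_L, (k < k')%N ==> (nl k' != nl k)]].
Definition Sset := [set k : 'I_L | [exists m : 'I_d, is_t1 nl pl ((k,true), m)]].

Lemma r_le_N : (r_tilde nl <= #|Nset|)%N.
Proof.
rewrite /r_tilde; apply: leq_trans (leq_imset_card nl Nset).
apply: subset_leq_card; apply/subsetP => i /imsetP [k _ ->].
have [k0 [/eqP e0 H0]] := first_occ (P := fun x => nl x == nl k) (eqxx (nl k)).
apply/imsetP; exists k0; last by rewrite e0.
rewrite inE; apply/forallP => k'; apply/implyP => lt; rewrite e0; exact: H0.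
Qed.

Lemma r_le_L : (r_tilde nl <= #|Lset|)%N.
Proof.
rewrite /r_tilde; apply: leq_trans (leq_imset_card nl Lset).
apply: subset_leq_card; apply/subsetP => i /imsetP [k _ ->].
have [k0 [/eqP e0 H0]] := last_occ (P := fun x => nl x == nl k) (eqxx (nl k)).
apply/imsetP; exists k0; last by rewrite e0.
rewrite inE; apply/forallP => k'; apply/implyP => lt; rewrite e0; exact: H0.
Qed.

Lemma single_edge_set (k : 'I_L) j b0 :
  (j \in edge_p pl (k, b0)) -> (j \in edge_p pl (k, ~~ b0)) = false ->
  [set e : edge L | (e.1 == k) && (j \in edge_p pl e)] = [set (k, b0)].
Proof.
move=> H1 H2; apply/setP => [[k' b]]; rewrite !inE /= xpair_eqE.
case: (eqVneq k' k) => [->|] //=.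
by case: b b0 H1 H2 => [] [] //= _ ->.
Qed.

Lemma NL_le : (#|Nset| + #|Lset| <= L)%N.
Proof.
have disj : Nset :&: Lset = set0.
  apply/setP => k; rewrite !inE; apply/negP => /andP [/forallP HN /forallP HL].
  have Hall : forall k', k' != k -> nl k' != nl k.
    move=> k' nk; case: (ltngtP k' k) => [lt|gt|eq].
    - by have := HN k'; rewrite lt.
    - by have := HL k'; rewrite gt.
    - by rewrite (ord_inj eq) eqxx in nk.
  have Hmem : pl k =i pl (ordS k).
    move=> j; apply/eqP/negPn/negP => Hne.
    have := Hpar (nl k) j.
    have -> : [set e : edge L | (edge_n nl e == nl k) && (j \in edge_p pl e)] =
              [set e : edge L | (e.1 == k) && (j \in edge_p pl e)].
      apply/setP => [[k' b]]; rewrite !inE /edge_n /=.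
      case: (eqVneq k' k) => [->|nk]; first by rewrite eqxx.
      by rewrite (negbTE (Hall _ nk)).
    case Hj : (j \in pl k) in Hne.
    - rewrite (@single_edge_set k j false) ?cards1 //=.
      by move: Hne; case: (j \in pl (ordS k)).
    - rewrite (@single_edge_set k j true) ?cards1 //=.
      by move: Hne; case: (j \in pl (ordS k)).
  have := uniq_perm (Huniq k) (Huniq (ordS k)) Hmem.
  by case: Hnb => _ _ /(_ k) /negP.
have := cardsUI Nset Lset; rewrite disj cards0 addn0 => <-.
by rewrite -[X in (_ <= X)%N]card_ord max_card.
Qed.

Lemma S_le : (#|Sset| + #|Lset| <= L)%N.
Proof.
have sub : Sset \subset ~: Lset.
  apply/subsetP => k; rewrite !inE => /existsP [m Ht].
  apply/negP => /forallP HL.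
  move: Ht; rewrite /is_t1 /edge_p /= => /forallP Ht.
  set j := tnth (pl (ordS k)) m in Ht.
  have := Hpar (nl k) j.
  have -> : [set e : edge L | (edge_n nl e == nl k) && (j \in edge_p pl e)] =
            [set (k, true)].
    apply/setP => [[k' b]]; rewrite !inE /edge_n /edge_p /= xpair_eqE.
    case: (ltngtP k k') => [lt|gt|eq].
    - have := HL k'; rewrite lt /= => /negbTE ->.
      by rewrite (_ : (k' == k) = false) //; apply/negP => /eqP E; rewrite E ltnn in lt.
    - rewrite (_ : (k' == k) = false); last first.
        by apply/negP => /eqP E; rewrite E ltnn in gt.
      case: b.
      + have Hs : val (ordS k') = k'.+1 by apply: ordS_val; move: (ltn_ord k); lia.
        by have := Ht (ordS k'); rewrite Hs gt /= => /negbTE ->; rewrite andbF.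
      + by have := Ht k'; rewrite (ltnW gt) /= => /negbTE ->; rewrite andbF.
    - move: eq => /ord_inj E; subst k'; rewrite !eqxx /=.
      case: b => //=; first by rewrite /j mem_tnth.
      by have := Ht k; rewrite leqnn /= => /negbTE ->.
  by rewrite cards1.
apply: (@leq_trans (#|Lset| + #|~: Lset|)); last by rewrite cardsC card_ord.
by rewrite addnC leq_add2l subset_leq_card.
Qed.

Definition T1s := [set s : subedge L d | is_t1 nl pl s].
Definition T3s := [set s : subedge L d | is_t3 nl pl s].
Definition T4s := [set s : subedge L d | ~~ is_t1 nl pl s && ~~ is_t3 nl pl s].
Definition pT1 := [set s : subedge L d | s.1.2 && is_t1 nl pl s].
Definition Bs := [set s : subedge L d | [&& s.1.2, s.1.1 \in Sset & ~~ is_t1 nl pl s]].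
Definition Ap := [set s : subedge L d | s.1.2 && (s.1.1 \in Sset)].
Definition An := [set s : subedge L d | ~~ s.1.2 && (s.1.1 \in Nset)].

Lemma card_An : #|An| = (#|Nset| * d)%N.
Proof.
have -> : An = (fun km : 'I_L * 'I_d => ((km.1, false), km.2)) @: setX Nset setT.
  apply/setP => [[[k b] m]]; rewrite inE /=; apply/idP/imsetP.
  - by case: b => //= Hk; exists (k, m) => //; rewrite inE Hk inE.
  - by case=> [[kk mm]]; rewrite inE /= => /andP [Hk _] [-> -> _].
rewrite card_imset; first by rewrite cardsX cardsT card_ord.
by move=> [a b] [a' b'] /= [-> ->].
Qed.

Lemma card_Ap : #|Ap| = (#|Sset| * d)%N.
Proof.
have -> : Ap = (fun km : 'I_L * 'I_d => ((km.1, true), km.2)) @: setX Sset setT.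
  apply/setP => [[[k b] m]]; rewrite inE /=; apply/idP/imsetP.
  - by case: b => //= Hk; exists (k, m) => //; rewrite inE Hk inE.
  - by case=> [[k' m']]; rewrite inE /= => /andP [Hk _] [-> -> _].
rewrite card_imset; first by rewrite cardsX cardsT card_ord.
by move=> [a b] [a' b'] /= [-> ->].
Qed.

Lemma t1_lower : (#|Nset| * d + #|pT1| <= #|T1s|)%N.
Proof.
rewrite -card_An -cardU_disj.
- apply: subset_leq_card; apply/subsetP => [[[k b] m]].
  rewrite !inE /= => /orP [/andP [Hb Hk]|/andP [_ Ht]] //.
  by case: b Hb Hk => //= _; rewrite inE.
- apply/setP => [[[k b] m]]; rewrite !inE /=.
  by case: b; rewrite /= ?andbF.
Qed.

Lemma B_le : (#|Bs| + #|pT1| <= #|Sset| * d)%N.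
Proof.
rewrite -card_Ap -cardU_disj.
- apply: subset_leq_card; apply/subsetP => [[[k b] m]].
  rewrite !inE /= => /orP [/and3P [Hb Hk _]|/andP [Hb Ht]]; first by rewrite Hb Hk.
  by rewrite Hb /=; case: b Hb Ht => // _ Ht; rewrite ?inE; apply/existsP; exists m.
- apply/setP => s; rewrite !inE.
  by case: (is_t1 nl pl s); rewrite ?andbF ?andbT.
Qed.

Lemma T_sum : (#|T1s| + #|T3s| + #|T4s| <= L * 2 * d)%N.
Proof.
rewrite -cardU_disj; last first.
  apply/setP => s; rewrite !inE /is_t3.
  by case: (is_t1 nl pl s).
rewrite -cardU_disj; last first.
  apply/setP => s; rewrite !inE.
  by case: (is_t1 nl pl s); case: (is_t3 nl pl s); rewrite ?andbF.
have := max_card (T1s :|: T3s :|: T4s).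
by rewrite !card_prod card_bool !card_ord.
Qed.

Lemma T4_le : (num_T4 nl pl <= #|T4s| + #|Bs|)%N.
Proof.
rewrite /num_T4.
apply: (@leq_trans #|(fst @: T4s) :|: (fst @: Bs)|); last first.
  apply: leq_trans (cardU_le _ _) _.
  by apply: leq_add; apply: leq_imset_card.
apply: subset_leq_card; apply/subsetP => e; rewrite inE /is_T4 => /andP [HT1 HT3].
case: (boolP [exists m : 'I_d, (e, m) \in T4s]) => [/existsP [m Hm]|Hno].
  by apply/setUP; left; apply/imsetP; exists (e, m).
have Hall : forall m, is_t1 nl pl (e, m) || is_t3 nl pl (e, m).
  move=> m; move/existsPn: Hno => /(_ m); rewrite inE.
  by case: (is_t1 nl pl (e, m)); case: (is_t3 nl pl (e, m)).
move/forallPn: HT1 => [m1 Hm1]; move/forallPn: HT3 => [m2 Hm2].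
have Ht2 : is_t1 nl pl (e, m2) by move: (Hall m2); rewrite (negbTE Hm2) orbF.
apply/setUP; right; apply/imsetP; exists (e, m1) => //.
clear Hno; case: e Hall Hm1 Hm2 Ht2 => k b _ Hm1 Hm2 Ht2.
case: b Hm1 Hm2 Ht2 => Hm1 Hm2 Ht2.
- by rewrite inE /= Hm1 andbT inE; apply/existsP; exists m2.
- have E : is_t1 nl pl ((k, false), m1) = is_t1 nl pl ((k, false), m2) by [].
  by rewrite E Ht2 in Hm1.
Qed.

Lemma c_le (z : 'I_L) : val z = 0 -> (c_tilde pl <= d + #|pT1|)%N.
Proof.
move=> hz.
pose lab (s : subedge L d) := tnth (edge_p pl s.1) s.2.
apply: (@leq_trans #|[set j | j \in pl z] :|: lab @: pT1|).
  apply: subset_leq_card; apply/subsetP => j; rewrite inE => /existsP [k Hk].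
  apply/setUP; case Hz : (j \in pl z); first by left; rewrite inE.
  right.
  have [k0 [Hk0 H0]] := first_occ (P := fun x => j \in pl x) Hk.
  have k0pos : (0 < k0)%N.
    rewrite lt0n; apply/negP => /eqP E0.
    have E' : k0 = z by apply: ord_inj; rewrite E0 hz.
    by rewrite E' Hz in Hk0.
  have Hlt : (k0.-1 < L)%N by move: (ltn_ord k0); lia.
  pose kk := Ordinal Hlt.
  have hv : (kk.+1 < L)%N by rewrite /=; move: (ltn_ord k0); lia.
  have Hk0S : ordS kk = k0 by apply: ord_inj; rewrite (ordS_val hv) /=; lia.
  have [m Hm] := tnth_idx Hk0.
  apply/imsetP; exists ((kk, true), m); last by rewrite /lab /edge_p /= Hk0S Hm.
  rewrite inE /= /is_t1 /edge_p /=; apply/forallP => k'; apply/implyP => Hle.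
  rewrite Hk0S Hm; apply: H0; move: Hle k0pos; rewrite /=; lia.
apply: leq_trans (cardU_le _ _) _; apply: leq_add; last exact: leq_imset_card.
by rewrite cardsE; apply: leq_trans (card_size _) _; rewrite size_tuple.
Qed.

Lemma main_nat (ell : nat) (z : 'I_L) : val z = 0 -> (d <= ell)%N ->
  (num_T4 nl pl + (12 * r_tilde nl * ell + 12 * c_tilde pl)
     <= 12 * ell + 6 * L * ell + 6 * d * L)%N.
Proof.
move=> hz hd.
have h1 := T4_le; have h2 := T_sum; have h3 := t1_le_t3; have h4 := t1_lower.
have h5 := B_le; have h6 := S_le; have h7 := r_le_N; have h8 := r_le_L.
have h9 := NL_le; have h10 := c_le hz.
move: h1 h2 h3 h4 h5 h6 h7 h8 h9 h10.
rewrite -/T1s -/T3s.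
move: (num_T4 nl pl) #|T4s| #|Bs| #|T1s| #|T3s| #|Nset| #|pT1| #|Sset| #|Lset|
  (r_tilde nl) (c_tilde pl) => a t4 bs t1 t3 N pt1 S Lc r c.
move=> h1 h2 h3 h4 h5 h6 h7 h8 h9 h10.
have p1 : (S * d + Lc * d <= L * d)%N by rewrite -mulnDl leq_mul2r h6 orbT.
have p2 : (r * d <= N * d)%N by rewrite leq_mul2r h7 orbT.
have p3 : (r * d <= Lc * d)%N by rewrite leq_mul2r h8 orbT.
have p4 : (2 * r <= L)%N by lia.
have p5 : (d * (L + 2) + 2 * r * ell <= ell * (L + 2) + 2 * r * d)%N.
  have : ((ell - d) * (2 * r) <= (ell - d) * (L + 2))%N by rewrite leq_mul2l; lia.
  rewrite !mulnBl; nia.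
nia.
Qed.
End Main.

From mathcomp Require Import ring lra.
Import Order.TTheory GRing.Theory Num.Theory.
Local Open Scope ring_scope.

Theorem proposition6p3 (d ell L n p : nat)
    (nl : 'I_L -> 'I_n) (pl : 'I_L -> d.-tuple 'I_p) :
  (0 < d)%N -> (d <= ell)%N -> (2 <= L)%N ->
  nb_multilabelling nl pl ->
  ((num_T4 nl pl)%:R : rat) <= 12%:R * Delta_bar nl pl ell * ell%:R.
Proof.
move=> d0 dl L2 Hnb.
have L0 : (0 < L)%N by lia.
have H := main_nat d0 Hnb (ell := ell) (z := Ordinal L0) erefl dl.
have ell0 : (ell%:R : rat) != 0 by rewrite pnatr_eq0 -lt0n; lia.
rewrite /Delta_bar.
move: H; rewrite -(ler_nat rat) natrD.
move: (num_T4 nl pl) (r_tilde nl) (c_tilde pl) => a r c.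
move=> H; rewrite !natrD !natrM in H.
have E : 12%:R * (1 + L%:R / 2 + (d * L)%:R / (2 * ell)%:R - r%:R - c%:R / ell%:R)
           * ell%:R =
         (12%:R * ell%:R + 6%:R * L%:R * ell%:R + 6%:R * d%:R * L%:R)
         - (12%:R * r%:R * ell%:R + 12%:R * c%:R) :> rat.
  rewrite !natrM; field; exact: ell0.
rewrite E; lra.
Qed.
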